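(* Let $G$ be a connected graph with $n\geq 2$ vertices and $m$ edges, and let $T(G)$ be its triangulation. Then $$R^+(T(G))=2R^+(G)+2R^*(G)+\frac{12m^2-mn-n^2-2m+n}{3}.$$
   Context: All graphs are finite, undirected, without loops or multiple edges. For a connected graph $H$ and vertices $i,j$, the resistance distance $\Omega_{ij}$ is the effective resistance between $i$ and $j$ in the electrical network obtained from $H$ by replacing each edge by a unit resistor. With $d_i$ the degree of vertex $i$ in $H$ and sums over unordered pairs of distinct vertices of $H$: $R^+(H)=\sum_{\{i,j\}\subseteq V(H)}(d_i+d_j)\Omega_{ij}$ (additive degree-Kirchhoff index) and $R^*(H)=\sum_{\{i,j\}\subseteq V(H)}d_id_j\Omega_{ij}$ (multiplicative degree-Kirchhoff index), with degrees and resistances taken in $H$. The triangulation $T(G)$ is obtained from $G$ by adding, for each edge $uv$, a new vertex $w$ adjacent to both $u$ and $v$ (keeping the edge $uv$). *)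

(* Defs.v *)
From HB Require Import structures.
From mathcomp Require Import all_boot all_order all_algebra.
From Stdlib Require Import ClassicalEpsilon.
Set Implicit Arguments. Unset Strict Implicit. Unset Printing Implicit Defensive.
Import Order.TTheory GRing.Theory Num.Theory.
Local Open Scope ring_scope.

Section Graphs.
Variable R : realFieldType.
Variable V : finType.
Variable e : rel V.

Definition simple_graph : Prop := symmetric e /\ irreflexive e.
Definition connected_graph : Prop := forall x y : V, connect e x y.

Definition deg (v : V) : nat := #|[set u | e v u]|.

(* Kirchhoff's current law: phi is a potential for a unit current entering
   at i and leaving at j, each edge being a unit resistor *)
Definition unit_current_potential (i j : V) (phi : V -> R) : Prop :=
  forall v : V, \sum_(u | e v u) (phi v - phi u) =
                ((v == i)%:R - (v == j)%:R).

(* effective resistance: potential difference between i and j for any such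
   potential (unique up to an additive constant when the graph is connected) *)
Definition resistance (i j : V) : R :=
  let phi := epsilon (inhabits (fun _ : V => 0 : R))
                     (unit_current_potential i j) in
  phi i - phi j.

(* sums over unordered pairs {i,j} of distinct vertices = half of ordered sums *)
Definition add_deg_kirchhoff : R :=
  (\sum_(i : V) \sum_(j : V | j != i)
      ((deg i + deg j)%:R * resistance i j)) / 2.
Definition mul_deg_kirchhoff : R :=
  (\sum_(i : V) \sum_(j : V | j != i)
      ((deg i * deg j)%:R * resistance i j)) / 2.

Definition is_edge (A : {set V}) : bool :=
  [exists u, exists v, e u v && (A == [set u; v])].
Definition edge_type := {A : {set V} | is_edge A}.
Definition num_edges : nat := #|{: edge_type}|.

(* triangulation T(G): vertex set V + edges; keep edges of G, and join each
   new vertex w_{uv} to u and v *)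
Definition tri_vertex := (V + edge_type)%type.
Definition tri_rel : rel tri_vertex := fun x y =>
  match x, y with
  | inl u, inl v => e u v
  | inl u, inr A => u \in val A
  | inr A, inl u => u \in val A
  | inr _, inr _ => false
  end.
End Graphs.

(* Main.v *)
From HB Require Import structures.
From mathcomp Require Import all_boot all_order all_algebra.
From Stdlib Require Import ClassicalEpsilon.
From mathcomp Require Import ring lra zify.
From Stdlib Require Import Lia.
Require Import Defs.
Set Implicit Arguments. Unset Strict Implicit. Unset Printing Implicit Defensive.
Import Order.TTheory GRing.Theory Num.Theory.
Local Open Scope ring_scope.

Section Gen.
Variables (R : realFieldType) (V : finType) (e : rel V).

Definition lap (phi : V -> R) v := \sum_(u | e v u) (phi v - phi u).

Lemma lapB f g v : lap (fun x => f x - g x) v = lap f v - lap g v.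
Proof. by rewrite /lap -sumrB; apply: eq_bigr => u _; ring. Qed.

Lemma lap_harm_const (d : V -> R) : connected_graph e ->
  (forall v, lap d v = 0) -> forall x y, d x = d y.
Proof.
move=> con H x y.
case: (@arg_maxP _ R V x predT d) => // m _ Hm.
suff K: forall z, connect e m z -> d z = d m.
  by rewrite (K x (con _ _)) (K y (con _ _)).
move=> z /connectP [p pth ->].
have: d m = d m by [].
elim: p {1 3 4}m pth => [|b p IH] a /=; first by move=> _ ->.
case/andP=> eab pth Ha.
apply: (IH b pth).
have H0 := H a; rewrite /lap in H0.
have X : d a - d b = 0.
  apply: (@psumr_eq0P R V (e a) (fun u => d a - d u) _ H0 b eab) => u _.
  by rewrite subr_ge0 -Ha; apply: (Hm u isT).
by rewrite Ha; apply/subr0_eq.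
Qed.


Lemma degE v : (deg e v)%:R = \sum_(u | e v u) (1 : R).
Proof.
rewrite /deg -sum1_card natr_sum; apply: eq_bigl => u; by rewrite inE.
Qed.

Lemma res_pot (con : connected_graph e) i j phi :
  unit_current_potential e i j phi -> resistance R e i j = phi i - phi j.
Proof.
move=> Hphi; rewrite /resistance.
set psi := epsilon _ _.
have Hpsi : unit_current_potential e i j psi.
  by apply: epsilon_spec; exists phi.
have E : psi i - phi i = psi j - phi j.
  apply: (@lap_harm_const (fun x => psi x - phi x) con _ i j) => v.
  rewrite lapB; have := Hpsi v; have := Hphi v.
  by rewrite /lap => -> ->; rewrite subrr.
have : (psi i - psi j) - (phi i - phi j) = (psi i - phi i) - (psi j - phi j) by ring.
by rewrite E subrr => /subr0_eq.
Qed.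

Lemma pot_neg i j (phi : V -> R) : unit_current_potential e i j phi ->
  unit_current_potential e j i (fun x => - phi x : R).
Proof.
move=> H v; have := H v => {}H.
rewrite -[RHS]opprB -H -sumrN; apply: eq_bigr => u _; ring.
Qed.

Definition lapc v u : R := (v == u)%:R * (deg e v)%:R - (e v u)%:R.

Lemma lap_lapc phi v : lap phi v = \sum_u lapc v u * phi u.
Proof.
rewrite /lap /lapc sumrB.
transitivity (\sum_u ((v==u)%:R * (deg e v)%:R * phi u) - \sum_u (e v u)%:R * phi u);
  last by rewrite -sumrB; apply: eq_bigr => u _; ring.
congr (_ - _).
  have -> : \sum_u (v==u)%:R * (deg e v)%:R * phi u = (deg e v)%:R * phi v.
    rewrite (bigD1 v) //= eqxx big1 ?addr0 ?mul1r // => u.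
    by rewrite eq_sym => /negPf ->; rewrite !mul0r.
  by rewrite degE mulr_suml; under [RHS]eq_bigr do rewrite mul1r.
rewrite big_mkcond; apply: eq_bigr => u _.
by case: (e v u); rewrite ?mul1r ?mul0r.
Qed.


Lemma lapc_sym (es : symmetric e) v u : lapc v u = lapc u v.
Proof. by rewrite /lapc eq_sym es; case: eqP => [->|]; rewrite ?mul0r. Qed.

Lemma sum_e1 v : \sum_u (e v u)%:R = (deg e v)%:R :> R.
Proof.
rewrite degE [RHS]big_mkcond; apply: eq_bigr => u _; by case: (e v u).
Qed.

Lemma lapc_row v : \sum_u lapc v u = 0.
Proof.
rewrite /lapc sumrB sum_e1 (bigD1 v) //= eqxx big1 ?addr0 ?mul1r ?subrr // => u.
by rewrite eq_sym => /negPf ->; rewrite !mul0r.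
Qed.

Lemma sum_enum (F : V -> R) : \sum_u F u = \sum_(i < #|V|) F (enum_val i).
Proof. rewrite -(big_enum_val (A:=predT)). by apply: eq_bigl. Qed.

Definition Lm : 'M[R]_#|V| := \matrix_(i, j) lapc (enum_val i) (enum_val j).

Lemma mulLm (es : symmetric e) (x : 'rV[R]_#|V|) j :
  (x *m Lm) 0 j = lap (fun u => x 0 (enum_rank u)) (enum_val j).
Proof.
rewrite mxE lap_lapc sum_enum.
by apply: eq_bigr => k _; rewrite mxE enum_valK (lapc_sym es) mulrC.
Qed.

Lemma pot_exists (es : symmetric e) (con : connected_graph e) (v0 : V)
  (b : V -> R) : \sum_v b v = 0 -> exists phi, forall v, lap phi v = b v.
Proof.
move=> b0.
set n := #|V|.
pose ones : 'M[R]_(n, 1) := const_mx 1.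
pose H := kermx ones.
have LH : (Lm <= H)%MS.
  apply/sub_kermxP; apply/matrixP => i k; rewrite !mxE.
  rewrite -[RHS](lapc_row (enum_val i)) sum_enum.
  by apply: eq_bigr => j _; rewrite !mxE mulr1.
have rH : (\rank H <= n.-1)%N.
  rewrite mxrank_ker.
  suff : (0 < \rank ones)%N by rewrite /n; lia.
  rewrite lt0n mxrank_eq0; apply/eqP => /matrixP /(_ (enum_rank v0) 0).
  by rewrite !mxE => /eqP; rewrite oner_eq0.
have rL : (n.-1 <= \rank Lm)%N.
  have : (\rank (kermx Lm) <= 1)%N.
    apply: (@leq_trans (\rank (const_mx 1 : 'rV[R]_n))); last exact: rank_leq_row.
    apply: mxrankS; apply/row_subP => i.
    set x := row i (kermx Lm).
    have x0 : x *m Lm = 0 by rewrite /x -row_mul mulmx_ker row0.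
    have harm : forall v, lap (fun u => x 0 (enum_rank u)) v = 0.
      move=> v; rewrite -[v]enum_rankK -mulLm // x0 mxE //.
    have -> : x = x 0 (enum_rank v0) *: const_mx 1.
      apply/rowP => k; have := lap_harm_const con harm (enum_val k) v0.
      by rewrite enum_valK => ->; rewrite !mxE mulr1.
    by apply: scalemx_sub; exact: submx_refl.
  rewrite mxrank_ker /n => ?; lia.
have HL : (H <= Lm)%MS.
  rewrite -(mxrank_leqif_sup LH).2; apply/eqP/anti_leq; rewrite mxrankS //=.
  exact: leq_trans rH rL.
pose bv : 'rV[R]_n := \row_i b (enum_val i).
have bH : (bv <= H)%MS.
  apply/sub_kermxP; apply/rowP => k; rewrite !mxE -[RHS]b0 sum_enum.
  by apply: eq_bigr => j _; rewrite !mxE mulr1.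
have /submxP [D HD] := submx_trans bH HL.
exists (fun u => D 0 (enum_rank u)) => v.
move/matrixP: HD => /(_ 0 (enum_rank v)).
by rewrite mulLm // enum_rankK mxE enum_rankK => <-.
Qed.

End Gen.

Section Edges.
Variables (R : realFieldType) (V : finType) (e : rel V).
Hypotheses (es : symmetric e) (eirr : irreflexive e).

Lemma edgeP (A : edge_type e) : exists a b, [/\ e a b, a != b & val A = [set a; b]].
Proof.
case: A => A /= /existsP [a /existsP [b /andP [eab /eqP ->]]].
exists a, b; split => //; apply/negP => /eqP abe; by rewrite abe eirr in eab.
Qed.

Lemma edge_card (A : edge_type e) : #|val A| = 2%N.
Proof. by have [a [b [_ ab ->]]] := edgeP A; rewrite cards2 ab. Qed.

Lemma sum_set2 (f : V -> R) a b : a != b -> \sum_(u in [set a; b]) f u = f a + f b.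
Proof.
by move=> ab; rewrite big_setU1 ?big_set1 // inE.
Qed.

Definition other v (A : edge_type e) : V := odflt v [pick w in val A :\ v].

Lemma otherP v (A : edge_type e) : v \in val A ->
  [/\ val A = [set v; other v A], e v (other v A) & other v A != v].
Proof.
have [a [b [eab ab E]]] := edgeP A.
rewrite /other E; case: pickP => [w|]; last first.
  move=> H; rewrite !inE => /orP [] /eqP vE; subst v.
  - by have := H b; rewrite !inE eqxx orbT andbT eq_sym ab.
  - by have := H a; rewrite !inE eqxx andbT ab.
rewrite !inE => /andP [wv wab] /orP [] /eqP vE; subst v => /=.
- move: wab wv; case/orP => /eqP ->; first by rewrite eqxx.
  by move=> _; split => //; rewrite eq_sym.
- move: wab wv; case/orP => /eqP ->; last by rewrite eqxx.
  by move=> _; split; [rewrite setUC | rewrite es | ].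
Qed.

Lemma sum_edges_at v (f : V -> R) :
  \sum_(A : edge_type e | v \in val A) f (other v A) = \sum_(u | e v u) f u.
Proof.
symmetry.
rewrite (@reindex_omap _ _ _ _ _ (other v) (fun u => insub [set v; u])).
  apply: eq_bigl => A; apply/idP/idP.
    case/andP => _ /eqP H.
    by have := @insubK _ _ (edge_type e) [set v; other v A]; rewrite H /= => ->; rewrite set21.
  move=> vA; have [E1 E2 _] := otherP vA; rewrite E2 /= -E1.
  by rewrite valK.
move=> u evu.
have Hs : is_edge e [set v; u].
  by apply/existsP; exists v; apply/existsP; exists u; rewrite evu eqxx.
rewrite (insubT _ Hs) /=; congr Some.
have vin : v \in val (Sub [set v; u] Hs : edge_type e) by rewrite SubK set21.
have [E1 _ ne] := otherP vin.
move: E1; rewrite SubK => E1.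
have : u \in [set v; other v (Sub [set v; u] Hs)] by rewrite -E1 set22.
rewrite !inE => /orP [/eqP uv|/eqP //].
by rewrite uv eirr in evu.
Qed.

End Edges.

Section Tri.
Variables (R : realFieldType) (V : finType) (e : rel V).
Hypotheses (es : symmetric e) (eirr : irreflexive e) (con : connected_graph e).

Local Notation TV := (tri_vertex e).
Local Notation Tr := (@tri_rel V e).

Lemma sumT_inl v (F : TV -> R) : \sum_(y | Tr (inl v) y) F y =
  \sum_(u | e v u) F (inl u) + \sum_(A : edge_type e | v \in val A) F (inr A).
Proof. by rewrite big_sumType. Qed.

Lemma sumT_inr A (F : TV -> R) : \sum_(y | Tr (inr A) y) F y =
  \sum_(u in val A) F (inl u).
Proof. by rewrite big_sumType /= [X in _ + X]big_pred0 // addr0; apply: eq_bigl. Qed.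

Lemma degT_inl v : (deg Tr (inl v))%:R = 2 * (deg e v)%:R :> R.
Proof.
rewrite degE sumT_inl degE.
have := sum_edges_at es eirr v (fun _ => 1 : R) => ->; ring.
Qed.

Lemma degT_inr A : (deg Tr (inr A))%:R = 2 :> R.
Proof.
by rewrite degE sumT_inr sumr_const (edge_card eirr).
Qed.

Lemma tri_conn : connected_graph Tr.
Proof.
have ll : forall u v, connect Tr (inl u) (inl v).
  move=> u v; have /connectP [p pth ->] := con u v.
  elim: p u pth => [|w p IH] u /=; first by move=> _; exact: connect0.
  case/andP => euw pth; apply: connect_trans (IH _ pth).
  by apply: connect1.
have ar : forall A, exists a, connect Tr (inr A) (inl a) /\ connect Tr (inl a) (inr A).
  move=> A; have [a [b [_ _ E]]] := edgeP eirr A.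
  by exists a; split; apply: connect1; rewrite /= E set21.
case=> [u|A] [v|B].
- exact: ll.
- have [b [_ H]] := ar B; exact: connect_trans (ll u b) H.
- have [a [H _]] := ar A; exact: connect_trans H (ll a v).
- have [a [H _]] := ar A; have [b [_ H']] := ar B.
  exact: connect_trans (connect_trans H (ll a b)) H'.
Qed.

Definition psiT (phi : V -> R) (c : edge_type e -> R) (x : TV) : R :=
  match x with
  | inl v => 2 / 3 * phi v
  | inr A => (\sum_(u in val A) phi u) / 3 + c A / 2
  end.

Lemma tri_pot (phi bV : V -> R) (c : edge_type e -> R) :
  (forall v, lap e phi v = bV v + (\sum_(A : edge_type e | v \in val A) c A) / 2) ->
  forall x, lap Tr (psiT phi c) x =
    match x with inl v => bV v | inr A => c A end.
Proof.
move=> H [v|A].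
- rewrite /lap sumT_inl /=.
  have E : \sum_(A : edge_type e | v \in val A) (2 / 3 * phi v - ((\sum_(u in val A) phi u) / 3 + c A / 2))
     = \sum_(A : edge_type e | v \in val A) ((phi v - phi (other v A)) / 3) - (\sum_(A : edge_type e | v \in val A) c A) / 2.
    rewrite mulr_suml -sumrB; apply: eq_bigr => A vA.
    have [E1 _ ne] := otherP es eirr vA.
    rewrite E1 sum_set2 1?eq_sym //; ring.
  rewrite E (sum_edges_at es eirr v (fun u => (phi v - phi u) / 3)).
  have := H v; rewrite /lap => HV.
  have -> : bV v = \sum_(u | e v u) (phi v - phi u) - (\sum_(A : edge_type e | v \in val A) c A) / 2.
    rewrite HV; ring.
  rewrite -mulr_suml.
  have -> : \sum_(u | e v u) (2 / 3 * phi v - 2 / 3 * phi u) = 2 / 3 * \sum_(u | e v u) (phi v - phi u).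
    rewrite mulr_sumr; apply: eq_bigr => *; ring.
  by field.
- rewrite /lap sumT_inr sumrB sumr_const (edge_card eirr) /= -mulr_sumr.
  by field.
Qed.

End Tri.

Section Green.
Variables (R : realFieldType) (V : finType) (e : rel V).
Hypotheses (es : symmetric e) (con : connected_graph e).
Variable r : V.

Lemma sum_dlt_mul (f : V -> R) x : \sum_v (v == x)%:R * f v = f x.
Proof.
rewrite (bigD1 x) //= eqxx mul1r big1 ?addr0 // => v /negPf ->; by rewrite mul0r.
Qed.

Lemma sum_dlt (x : V) : \sum_v (v == x)%:R = 1 :> R.
Proof. by rewrite -[RHS](sum_dlt_mul (fun _ => 1) x); apply: eq_bigr => *; rewrite mulr1. Qed.

Lemma sum_dd (f : V -> R) x : \sum_v ((v == x)%:R - (v == r)%:R) * f v = f x - f r.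
Proof. by under eq_bigr do rewrite mulrBl; rewrite sumrB !sum_dlt_mul. Qed.

Lemma nbr_swap (F : V -> V -> R) :
  \sum_v \sum_(u | e v u) F v u = \sum_v \sum_(u | e v u) F u v.
Proof.
under eq_bigr do rewrite big_mkcond.
rewrite exchange_big; apply: eq_bigr => v _; rewrite [RHS]big_mkcond.
by apply: eq_bigr => u _; rewrite es.
Qed.

Definition Gf (x : V) : V -> R := epsilon (inhabits (fun _ : V => 0 : R))
  (fun g => (forall v, lap e g v = (v == x)%:R - (v == r)%:R) /\ g r = 0).

Lemma Gf_spec x : (forall v, lap e (Gf x) v = (v == x)%:R - (v == r)%:R) /\ Gf x r = 0.
Proof.
rewrite /Gf; apply epsilon_spec.
have S0 : \sum_v ((v == x)%:R - (v == r)%:R) = 0 :> R by rewrite sumrB !sum_dlt subrr.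
have [phi Hphi] := @pot_exists R V e es con r (fun v => (v == x)%:R - (v == r)%:R) S0.
exists (fun v => phi v - phi r); split; last by rewrite subrr.
by move=> v; rewrite -Hphi /lap; apply: eq_bigr => *; ring.
Qed.

Lemma lap_sym_sum (f h : V -> R) :
  \sum_v lap e f v * h v = \sum_v f v * lap e h v.
Proof.
under eq_bigr do rewrite lap_lapc mulr_suml.
under [RHS]eq_bigr do rewrite lap_lapc mulr_sumr.
rewrite exchange_big; apply: eq_bigr => v _; apply: eq_bigr => u _.
rewrite (lapc_sym R es); ring.
Qed.

Lemma G_sym x y : Gf x y = Gf y x.
Proof.
have := lap_sym_sum (Gf y) (Gf x).
under eq_bigr do rewrite (proj1 (Gf_spec y)).
under [X in _ = X -> _]eq_bigr do rewrite (proj1 (Gf_spec x)) mulrC.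
by rewrite !sum_dd (proj2 (Gf_spec x)) (proj2 (Gf_spec y)) !subr0.
Qed.

Lemma resG i j : resistance R e i j = Gf i i + Gf j j - 2 * Gf i j.
Proof.
have P : forall v, lap e (fun v => Gf i v - Gf j v) v = (v == i)%:R - (v == j)%:R.
  by move=> v; rewrite lapB (proj1 (Gf_spec i)) (proj1 (Gf_spec j)); ring.
rewrite (res_pot con P) (G_sym j i); ring.
Qed.

Lemma foster : \sum_v \sum_(u | e v u) resistance R e v u = 2 * (#|V|%:R - 1).
Proof.
have A1 : \sum_v \sum_(u | e v u) (Gf v v - Gf v u) = #|V|%:R - 1.
  transitivity (\sum_v lap e (Gf v) v); first by [].
  under eq_bigr => v _ do rewrite (proj1 (Gf_spec v)) eqxx.
  by rewrite sumrB sum_dlt sumr_const.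
have A2 : \sum_v \sum_(u | e v u) (Gf u u - Gf u v) = #|V|%:R - 1.
  by rewrite -nbr_swap.
transitivity (\sum_v \sum_(u | e v u) ((Gf v v - Gf v u) + (Gf u u - Gf u v))).
  apply: eq_bigr => v _; apply: eq_bigr => u _; rewrite resG (G_sym u v); ring.
under eq_bigr do rewrite big_split.
by rewrite big_split /= A1 A2; ring.
Qed.

End Green.

Section TRes.
Variables (R : realFieldType) (V : finType) (e : rel V).
Hypotheses (es : symmetric e) (eirr : irreflexive e) (con : connected_graph e).
Variable r : V.

Local Notation TV := (tri_vertex e).
Local Notation Tr := (@tri_rel V e).
Local Notation G := (Gf R e r).
Local Notation Om := (resistance R e).
Local Notation OmT := (resistance R Tr).

Lemma lap_lin4 (f1 f2 f3 f4 : V -> R) a1 a2 a3 a4 u :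
  lap e (fun v => a1 * f1 v + a2 * f2 v + a3 * f3 v + a4 * f4 v) u =
  a1 * lap e f1 u + a2 * lap e f2 u + a3 * lap e f3 u + a4 * lap e f4 u.
Proof. rewrite /lap !mulr_sumr -!big_split; apply: eq_bigr => * /=; ring. Qed.

Lemma lapG x v : lap e (G x) v = (v == x)%:R - (v == r)%:R.
Proof. exact: (proj1 (Gf_spec R es con r x)). Qed.

Lemma resT_pot x y (psi : TV -> R) : unit_current_potential Tr x y psi ->
  OmT x y = psi x - psi y /\ OmT y x = psi x - psi y.
Proof.
move=> P; have cT := tri_conn eirr con.
rewrite (res_pot cT P) (res_pot cT (pot_neg P)); split => //; ring.
Qed.

Lemma sum_ind (A : edge_type e) (P : pred (edge_type e)) :
  \sum_(B | P B) (B == A)%:R = (P A)%:R :> R.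
Proof.
rewrite big_mkcond (bigD1 A) //= eqxx big1 ?addr0; first by case: (P A).
by move=> B /negPf ->; case: (P B).
Qed.

Lemma ind2 (a b v : V) : a != b -> (v \in [set a; b])%:R = (v == a)%:R + (v == b)%:R :> R.
Proof.
move=> ab; rewrite !inE; case: (eqVneq v a) => [->|]; last by rewrite add0r.
by rewrite (negPf ab) addr0.
Qed.

Lemma resT_ll i j : OmT (inl i) (inl j) = 2 / 3 * Om i j.
Proof.
pose phi v := 1 * G i v + (-1) * G j v + 0 * G i v + 0 * G i v.
have H : forall v, lap e phi v = ((v == i)%:R - (v == j)%:R) +
     (\sum_(A : edge_type e | v \in val A) (fun _ => 0) A) / 2.
  by move=> v; rewrite lap_lin4 !lapG big1 //; ring.
have P : unit_current_potential Tr (inl i) (inl j) (psiT phi (fun _ => 0)).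
  move=> x; have := tri_pot es eirr H x; rewrite /lap => ->; case: x => //= v; by rewrite subr0.
have [-> _] := resT_pot P.
have P2 : unit_current_potential e i j phi.
  by move=> v; have := H v; rewrite /lap => ->; rewrite big1 //; ring.
rewrite (res_pot con P2) /=; ring.
Qed.

Definition rho a b k := (Om a k + Om b k) / 3 - Om a b / 6 + 1 / 2.

Lemma resT_rl (A : edge_type e) k a b : a != b -> val A = [set a; b] ->
  OmT (inr A) (inl k) = rho a b k /\ OmT (inl k) (inr A) = rho a b k.
Proof.
move=> ab EA.
pose phi v := 1 / 2 * G a v + 1 / 2 * G b v + (-1) * G k v + 0 * G k v.
pose c := fun B : edge_type e => (B == A)%:R : R.
have H : forall v, lap e phi v = (-1) * (v == k)%:R +
     (\sum_(B : edge_type e | v \in val B) c B) / 2.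
  by move=> v; rewrite lap_lin4 !lapG sum_ind EA ind2 //; field.
have P : unit_current_potential Tr (inr A) (inl k) (psiT phi c).
  move=> x; have := tri_pot es eirr H x; rewrite /lap => ->.
  case: x => [v|B] /=; first by rewrite sub0r mulN1r.
  by rewrite subr0.
have [-> ->] := resT_pot P.
suff E : psiT phi c (inr A) - psiT phi c (inl k) = rho a b k by [].
rewrite /= EA sum_set2 // /c eqxx /phi /rho !(resG R es con r).
rewrite (G_sym R es con r b a) (G_sym R es con r k a) (G_sym R es con r k b).
rewrite (_ : true%:R = 1 :> R) //; by field.
Qed.

Definition rho2 a b c d := (Om a c + Om a d + Om b c + Om b d) / 6
   - (Om a b + Om c d) / 6 + 1.

Lemma resT_rr (A A' : edge_type e) a b c d : A != A' ->
  a != b -> val A = [set a; b] -> c != d -> val A' = [set c; d] ->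
  OmT (inr A) (inr A') = rho2 a b c d.
Proof.
move=> AA' ab EA cd EA'.
pose phi v := 1 / 2 * G a v + 1 / 2 * G b v + (- 1 / 2) * G c v + (- 1 / 2) * G d v.
pose cc := fun B : edge_type e => (B == A)%:R - (B == A')%:R : R.
have H : forall v, lap e phi v = 0 +
     (\sum_(B : edge_type e | v \in val B) cc B) / 2.
  by move=> v; rewrite lap_lin4 !lapG sumrB !sum_ind EA EA' !ind2 //; field.
have P : unit_current_potential Tr (inr A) (inr A') (psiT phi cc).
  move=> x; have := tri_pot es eirr H x; rewrite /lap => ->.
  by case: x => [v|B] /=; first by rewrite subr0.
have [-> _] := resT_pot P.
have A'A : (A' == A) = false by rewrite eq_sym (negPf AA').
rewrite /= EA EA' !sum_set2 // /cc eqxx (negPf AA') A'A /phi /rho2 !(resG R es con r).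
rewrite (G_sym R es con r b a) (G_sym R es con r c a) (G_sym R es con r d a).
rewrite (G_sym R es con r c b) (G_sym R es con r d b) (G_sym R es con r d c).
rewrite (_ : true%:R = 1 :> R) // (_ : false%:R = 0 :> R) //; rewrite eqxx (_ : true%:R = 1 :> R) //; by field.
Qed.

End TRes.

Lemma neqC (T : eqType) (x y : T) : x != y -> y != x.
Proof. by rewrite eq_sym. Qed.

Lemma sum_lin6 (R : realFieldType) (I : finType) (P : pred I) (F1 F2 F3 F4 F5 F6 : I -> R) a1 a2 a3 a4 a5 a6 :
  \sum_(i | P i) (a1 * F1 i + a2 * F2 i + a3 * F3 i + a4 * F4 i + a5 * F5 i + a6 * F6 i) =
  a1 * \sum_(i | P i) F1 i + a2 * \sum_(i | P i) F2 i + a3 * \sum_(i | P i) F3 i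
  + a4 * \sum_(i | P i) F4 i + a5 * \sum_(i | P i) F5 i + a6 * \sum_(i | P i) F6 i.
Proof. rewrite !mulr_sumr -!big_split; apply: eq_bigr => * /=; ring. Qed.

Lemma dsum_lin6 (R : realFieldType) (I J : finType) (P : I -> pred J) (F1 F2 F3 F4 F5 F6 : I -> J -> R) a1 a2 a3 a4 a5 a6 :
  \sum_i \sum_(j | P i j) (a1 * F1 i j + a2 * F2 i j + a3 * F3 i j + a4 * F4 i j + a5 * F5 i j + a6 * F6 i j) =
  a1 * \sum_i \sum_(j | P i j) F1 i j + a2 * \sum_i \sum_(j | P i j) F2 i j + a3 * \sum_i \sum_(j | P i j) F3 i j
  + a4 * \sum_i \sum_(j | P i j) F4 i j + a5 * \sum_i \sum_(j | P i j) F5 i j + a6 * \sum_i \sum_(j | P i j) F6 i j.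
Proof.
under eq_bigr do rewrite sum_lin6.
exact: (sum_lin6 xpredT).
Qed.

Lemma kirch_add (R : realFieldType) (W : finType) (f : rel W) :
  add_deg_kirchhoff R f =
  (\sum_i \sum_j (deg f i + deg f j)%:R * resistance R f i j) / 2.
Proof.
rewrite /add_deg_kirchhoff; congr (_ / 2); apply: eq_bigr => i _.
by rewrite [RHS](bigD1 i) //= /resistance subrr mulr0 add0r.
Qed.

Lemma kirch_mul (R : realFieldType) (W : finType) (f : rel W) :
  mul_deg_kirchhoff R f =
  (\sum_i \sum_j (deg f i * deg f j)%:R * resistance R f i j) / 2.
Proof.
rewrite /mul_deg_kirchhoff; congr (_ / 2); apply: eq_bigr => i _.
by rewrite [RHS](bigD1 i) //= /resistance subrr mulr0 add0r.
Qed.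

Section Final.
Variables (R : realFieldType) (V : finType) (e : rel V).
Hypotheses (es : symmetric e) (eirr : irreflexive e) (con : connected_graph e).
Variable r : V.

Local Notation TV := (tri_vertex e).
Local Notation Tr := (@tri_rel V e).
Local Notation Om := (resistance R e).
Local Notation OmT := (resistance R Tr).
Local Notation D v := ((deg e v)%:R : R).

Lemma sum_edges (F : edge_type e -> R) (f : V -> V -> R) :
  (forall (A : edge_type e) u, u \in val A -> F A = f u (other u A)) ->
  \sum_A F A = (\sum_u \sum_(w | e u w) f u w) / 2.
Proof.
move=> HF.
have E : (\sum_A F A) *+ 2 = \sum_u \sum_(w | e u w) f u w.
  rewrite -sumrMnl.
  transitivity (\sum_(A : edge_type e) \sum_(u in val A) f u (other u A)).
    apply: eq_bigr => A _; rewrite -(edge_card eirr A) -sumr_const.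
    by apply: eq_bigr => u uA; rewrite (HF A u uA).
  under eq_bigr do rewrite big_mkcond.
  rewrite exchange_big; apply: eq_bigr => u _.
  rewrite -(sum_edges_at es eirr u (f u)) [RHS]big_mkcond.
  by apply: eq_bigr => A _.
by rewrite -E mulr2n; field.
Qed.

Lemma nbr_l (g : V -> R) : \sum_u \sum_(w | e u w) g u = \sum_u D u * g u.
Proof. by apply: eq_bigr => u _; rewrite degE mulr_suml; under [RHS]eq_bigr do rewrite mul1r. Qed.

Lemma nbr_r (g : V -> R) : \sum_u \sum_(w | e u w) g w = \sum_u D u * g u.
Proof. by rewrite (nbr_swap es (fun u w => g w)) nbr_l. Qed.

Lemma handshake : \sum_u D u = 2 * (num_edges e)%:R.
Proof.
have E := @sum_edges (fun _ => 1) (fun _ _ => 1) (fun _ _ _ => erefl).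
have -> : (num_edges e)%:R = \sum_(A : edge_type e) (1 : R) by rewrite sumr_const.
rewrite E nbr_l.
under [X in _ = 2 * (X / 2)]eq_bigr do rewrite mulr1.
by field.
Qed.

Lemma OmS i j : Om i j = Om j i.
Proof. by rewrite !(resG R es con r) (G_sym R es con r j i); ring. Qed.

Lemma Om0 i : Om i i = 0.
Proof. by rewrite /resistance subrr. Qed.

Local Notation n := (#|V|%:R : R).
Local Notation m := ((num_edges e)%:R : R).

Definition Pv u := \sum_x D x * Om u x.
Definition Rk k := \sum_u \sum_(w | e u w) rho R e u w k.

Lemma nbr_1 : \sum_u \sum_(w | e u w) (1 : R) = 2 * m.
Proof. by rewrite nbr_l -handshake; apply: eq_bigr => *; rewrite mulr1. Qed.

Lemma Rk_val k : Rk k = 2 / 3 * Pv k - (2 * (n - 1)) / 6 + m.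
Proof.
rewrite /Rk.
transitivity (\sum_u \sum_(w | e u w) (1/3 * Om u k + 1/3 * Om w k + (-1/6) * Om u w
   + 1/2 * 1 + 0 * 1 + 0 * 1)).
  by apply: eq_bigr => u _; apply: eq_bigr => w _; rewrite /rho; ring.
rewrite (dsum_lin6 _ (fun u w => Om u k) (fun u w => Om w k) (fun u w => Om u w)
   (fun _ _ => 1) (fun _ _ => 1) (fun _ _ => 1)).
rewrite (nbr_l (fun u => Om u k)) (nbr_r (fun u => Om u k)) (foster R es con r) nbr_1.
have -> : \sum_u D u * Om u k = Pv k by apply: eq_bigr => u _; rewrite OmS.
by field.
Qed.

Lemma sumA_rl k : \sum_A OmT (inr A) (inl k) = Rk k / 2 /\
                  \sum_A OmT (inl k) (inr A) = Rk k / 2.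
Proof.
rewrite /Rk; split.
  apply: (@sum_edges (fun A => OmT (inr A) (inl k)) (fun u w => rho R e u w k)) => A u uA.
  have [E1 _ ne] := otherP es eirr uA.
  by have [-> _] := resT_rl R es eirr con r k (neqC ne) E1.
apply: (@sum_edges (fun A => OmT (inl k) (inr A)) (fun u w => rho R e u w k)) => A u uA.
have [E1 _ ne] := otherP es eirr uA.
by have [_ ->] := resT_rl R es eirr con r k (neqC ne) E1.
Qed.

Definition Q u w := \sum_u' \sum_(w' | e u' w') rho2 R e u w u' w'.

Lemma Q_val u w : Q u w = (Pv u + Pv w) / 3 - (2 * (n - 1)) / 6 + (1 - Om u w / 6) * (2 * m).
Proof.
rewrite /Q.
transitivity (\sum_u' \sum_(w' | e u' w') (1/6 * Om u u' + 1/6 * Om u w' + 1/6 * Om w u'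
   + 1/6 * Om w w' + (-1/6) * Om u' w' + (1 - Om u w / 6) * 1)).
  by apply: eq_bigr => u' _; apply: eq_bigr => w' _; rewrite /rho2; ring.
rewrite (dsum_lin6 _ (fun u' w' => Om u u') (fun u' w' => Om u w') (fun u' w' => Om w u')
   (fun u' w' => Om w w') (fun u' w' => Om u' w') (fun _ _ => 1)).
rewrite (nbr_l (fun u' => Om u u')) (nbr_r (fun u' => Om u u')).
rewrite (nbr_l (fun u' => Om w u')) (nbr_r (fun u' => Om w u')) (foster R es con r) nbr_1.
have E : forall x, \sum_u D u * Om x u = Pv x by [].
rewrite !E; by field.
Qed.

Lemma OmT0 x : OmT x x = 0.
Proof. by rewrite /resistance subrr. Qed.

Lemma rr_all (A A' : edge_type e) u a b : a != b -> val A = [set a; b] -> u \in val A' ->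
  OmT (inr A) (inr A') + (A' == A)%:R = rho2 R e a b u (other u A').
Proof.
move=> ab EA uA'; have [E1 _ ne] := otherP es eirr uA'.
case: (eqVneq A' A) => [AE|nAA].
  subst A'; rewrite OmT0 add0r (_ : true%:R = 1 :> R) //.
  set o := other u A in E1 ne *.
  have Hu : u \in [set a; b] by rewrite -EA E1 set21.
  have Ho : o \in [set a; b] by rewrite -EA E1 set22.
  move: Hu Ho; rewrite !inE => /orP [] /eqP Eu /orP [] /eqP Eo; rewrite Eu Eo.
  - by move: ne; rewrite Eu Eo eqxx.
  - by rewrite /rho2 !Om0 (OmS b a); field.
  - by rewrite /rho2 !Om0 (OmS b a); field.
  - by move: ne; rewrite Eu Eo eqxx.
rewrite (_ : false%:R = 0 :> R) ?addr0 //.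
exact: (resT_rr R es eirr con r (A:=A) (A':=A') (neqC nAA) ab EA (neqC ne) E1).
Qed.

Lemma sumA'_rr (A : edge_type e) u : u \in val A ->
  \sum_A' OmT (inr A) (inr A') = Q u (other u A) / 2 - 1.
Proof.
move=> uA; have [E1 _ ne] := otherP es eirr uA.
have H := @sum_edges (fun A' => OmT (inr A) (inr A') + (A' == A)%:R)
  (fun u' w' => rho2 R e u (other u A) u' w')
  (fun A' u' u'A' => rr_all (neqC ne) E1 u'A').
have S1 : \sum_(A' : edge_type e) (A' == A)%:R = 1 :> R.
  by have := sum_ind R A xpredT.
rewrite big_split /= S1 in H.
rewrite /Q -H; ring.
Qed.

Lemma B_rr : \sum_A \sum_A' OmT (inr A) (inr A') =
   (\sum_u \sum_(w | e u w) (Q u w / 2 - 1)) / 2.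
Proof.
apply: (@sum_edges (fun A => \sum_A' OmT (inr A) (inr A')) (fun u w => Q u w / 2 - 1)) => A u uA.
exact: sumA'_rr.
Qed.

Lemma sumP2 : (\sum_k Pv k) * 2 = \sum_i \sum_j (deg e i + deg e j)%:R * Om i j.
Proof.
under [RHS]eq_bigr do under eq_bigr do rewrite natrD.
have -> : \sum_i \sum_j (D i + D j) * Om i j =
   \sum_i \sum_j D i * Om i j + \sum_i \sum_j D j * Om i j.
  rewrite -big_split; apply: eq_bigr => i _; rewrite -big_split.
  by apply: eq_bigr => j _; rewrite mulrDl.
have E1 : \sum_i \sum_j D i * Om i j = \sum_k Pv k.
  by rewrite exchange_big; apply: eq_bigr => j _; apply: eq_bigr => i _; rewrite OmS.
have E2 : \sum_i \sum_j D j * Om i j = \sum_k Pv k by [].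
rewrite E1 E2; ring.
Qed.

Lemma sumDP : \sum_k D k * Pv k = \sum_i \sum_j (deg e i * deg e j)%:R * Om i j.
Proof. apply: eq_bigr => i _; rewrite /Pv mulr_sumr; apply: eq_bigr => j _; rewrite natrM; ring. Qed.

Lemma B_rr_val : \sum_A \sum_A' OmT (inr A) (inr A') =
  (1/6 * \sum_u D u * Pv u + 1/6 * \sum_u D u * Pv u + (- m / 6) * (2 * (n - 1))
   + (m - (n - 1) / 6 - 1) * (2 * m)) / 2.
Proof.
rewrite B_rr; congr (_ / 2).
transitivity (\sum_u \sum_(w | e u w) (1/6 * Pv u + 1/6 * Pv w + (- m / 6) * Om u w
   + (m - (n - 1) / 6 - 1) * 1 + 0 * 1 + 0 * 1)).
  apply: eq_bigr => u _; apply: eq_bigr => w _; rewrite Q_val; by field.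
rewrite (dsum_lin6 _ (fun u w => Pv u) (fun u w => Pv w) (fun u w => Om u w)
   (fun _ _ => 1) (fun _ _ => 1) (fun _ _ => 1)).
rewrite (nbr_l Pv) (nbr_r Pv) (foster R es con r) nbr_1; ring.
Qed.

Lemma sum_sum4 (F : TV -> TV -> R) :
  \sum_x \sum_y F x y =
  \sum_i \sum_j F (inl i) (inl j) + \sum_i \sum_(A : edge_type e) F (inl i) (inr A)
  + (\sum_(A : edge_type e) \sum_j F (inr A) (inl j) + \sum_(A : edge_type e) \sum_(A' : edge_type e) F (inr A) (inr A')).
Proof.
rewrite big_sumType; congr (_ + _); rewrite -big_split; apply: eq_bigr => * ; by rewrite big_sumType.
Qed.

Lemma sum1n : \sum_(i : V) (1 : R) = n.
Proof. by rewrite sumr_const. Qed.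

Lemma main_eq : add_deg_kirchhoff R Tr =
    2 * add_deg_kirchhoff R e + 2 * mul_deg_kirchhoff R e
    + ((12 * m ^+ 2 - m * n - n ^+ 2 - 2 * m + n) / 3).
Proof.
rewrite !kirch_add kirch_mul sum_sum4.
have B1 : \sum_i \sum_j (deg Tr (inl i) + deg Tr (inl j))%:R * OmT (inl i) (inl j)
   = 4 / 3 * \sum_i \sum_j (deg e i + deg e j)%:R * Om i j.
  rewrite mulr_sumr; apply: eq_bigr => i _; rewrite mulr_sumr; apply: eq_bigr => j _.
  rewrite !natrD !(degT_inl R es eirr) (resT_ll R es eirr con r); ring.
have B2 : \sum_i \sum_(A : edge_type e) (deg Tr (inl i) + deg Tr (inr A))%:R * OmT (inl i) (inr A)
   = \sum_i (2 * D i + 2) * (Rk i / 2).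
  apply: eq_bigr => i _.
  under eq_bigr do rewrite natrD (degT_inl R es eirr) (degT_inr R eirr).
  by rewrite -mulr_sumr (proj2 (sumA_rl i)).
have B3 : \sum_(A : edge_type e) \sum_j (deg Tr (inr A) + deg Tr (inl j))%:R * OmT (inr A) (inl j)
   = \sum_i (2 * D i + 2) * (Rk i / 2).
  rewrite exchange_big; apply: eq_bigr => i _.
  under eq_bigr do rewrite natrD (degT_inl R es eirr) (degT_inr R eirr) addrC.
  by rewrite -mulr_sumr (proj1 (sumA_rl i)).
have B4 : \sum_(A : edge_type e) \sum_(A' : edge_type e) (deg Tr (inr A) + deg Tr (inr A'))%:R * OmT (inr A) (inr A')
   = 4 * \sum_A \sum_A' OmT (inr A) (inr A').
  rewrite mulr_sumr; apply: eq_bigr => A _; rewrite mulr_sumr; apply: eq_bigr => A' _.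
  by rewrite natrD !(degT_inr R eirr); congr (_ * _); ring.
have B23 : \sum_i (2 * D i + 2) * (Rk i / 2) =
   2/3 * \sum_i D i * Pv i + 2/3 * \sum_i Pv i + (m - (2 * (n - 1)) / 6) * \sum_i D i
   + (m - (2 * (n - 1)) / 6) * \sum_(i : V) 1 + 0 * \sum_(i : V) 1 + 0 * \sum_(i : V) 1.
  rewrite -(sum_lin6 xpredT (fun i => D i * Pv i) Pv (fun i => D i) (fun _ => 1) (fun _ => 1) (fun _ => 1)).
  by apply: eq_bigr => i _; rewrite Rk_val; field.
rewrite B1 B2 B3 B4 B_rr_val B23 -sumP2 -sumDP handshake sum1n.
set SP := \sum_k Pv k. set SD := \sum_u D u * Pv u.
by field.
Qed.

End Final.

Theorem theorem4p4 (R : realFieldType) (V : finType) (e : rel V) :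
  simple_graph e -> connected_graph e -> (1 < #|V|)%N ->
  add_deg_kirchhoff R (@tri_rel V e) =
    2 * add_deg_kirchhoff R e + 2 * mul_deg_kirchhoff R e
    + ((12 * (num_edges e)%:R ^+ 2 - (num_edges e)%:R * #|V|%:R
        - #|V|%:R ^+ 2 - 2 * (num_edges e)%:R + #|V|%:R) / 3).
Proof.
move=> [es eirr] con n1.
have : (0 < #|V|)%N by apply: leq_trans n1.
case/card_gt0P => r _.
exact: (main_eq R es eirr con r).
Qed.
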